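(* Suppose Assumption 1 holds, $f$ is convex, $F$ is $\mu$-optimal-set-strongly convex for some $\mu>0$, every $d^k$ in Algorithm 1 satisfies the $\eta$-inexactness condition for a fixed $\eta\in[0,1)$, and $\sigma I\preceq H_k\preceq MI$ for all $k$, for some $M\ge\sigma>0$. Then for all $k=0,1,2,\dots$, $$\frac{F(x^{k+1})-F^*}{F(x^k)-F^*}\le1-\frac{\alpha_k\gamma(1-\eta)\mu}{\mu+\|H_k\|}\le1-\frac{\gamma\mu}{\mu+M}\min\left\{1-\eta,\ \frac{2(1-\sqrt\eta)\beta(1-\gamma)\sigma}{L}\right\}.$$ Moreover, for every $k$ with $F(x^k)-F^*\ge(x^k-P_\Omega(x^k))^TH_k(x^k-P_\Omega(x^k))$, one also has $$\frac{F(x^{k+1})-F^*}{F(x^k)-F^*}\le1-\frac{(1-\eta)\gamma\alpha_k}{2}\le1-\frac\gamma2\min\left\{1-\eta,\ \frac{2(1-\sqrt\eta)\beta(1-\gamma)\sigma}{L}\right\}.$$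
   Context: Problem setting: $F(x)=f(x)+\psi(x)$ on $\mathbb{R}^n$, $F^*=\inf F$, $\Omega=\{x:F(x)=F^*\}$, $P_\Omega$ the Euclidean projection onto $\Omega$, $\|\cdot\|$ the Euclidean / spectral norm. Assumption 1: $f$ is differentiable with $L$-Lipschitz continuous gradient ($L>0$); $\psi:\mathbb{R}^n\to\mathbb{R}\cup\{+\infty\}$ is convex, proper and closed; $F$ is bounded below; $\Omega$ is nonempty. $F$ is $\mu$-optimal-set-strongly convex ($\mu\ge0$) if for all $x$ and all $\lambda\in[0,1]$: $F(\lambda x+(1-\lambda)P_\Omega(x))\le\lambda F(x)+(1-\lambda)F^*-\frac{\mu\lambda(1-\lambda)}2\|x-P_\Omega(x)\|^2$. For $x\in\mathbb{R}^n$ and symmetric $H$, $Q^x_H(d)\coloneqq\nabla f(x)^Td+\frac12d^THd+\psi(x+d)-\psi(x)$, $Q^*=\inf_dQ^x_H(d)$; $d$ satisfies the $\eta$-inexactness condition if $Q^x_H(d)\le(1-\eta)Q^*$. Algorithm 1: given $\beta,\gamma\in(0,1)$, $x^0$, fixed $\eta\in[0,1)$; for $k=0,1,\dots$: choose symmetric $H_k$ with $Q_k\coloneqq Q^{x^k}_{H_k}$ strongly convex; compute $d^k$ satisfying the $\eta$-inexactness condition for $Q_k$; let $\Delta_k=\nabla f(x^k)^Td^k+\psi(x^k+d^k)-\psi(x^k)$; let $\alpha_k=\beta^i$ for the smallest nonnegative integer $i$ with $F(x^k+\alpha_kd^k)\le F(x^k)+\alpha_k\gamma\Delta_k$; set $x^{k+1}=x^k+\alpha_kd^k$.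 *)

(* Defs.v *)
From Stdlib Require Import Reals ClassicalEpsilon.
From mathcomp Require Import ssreflect ssrfun ssrbool eqtype ssrnat seq fintype bigop.
Open Scope R_scope.

Definition vec (n : nat) := 'I_n -> R.
Definition mat (n : nat) := 'I_n -> 'I_n -> R.

Definition vadd {n} (u v : vec n) : vec n := fun i => u i + v i.
Definition vsub {n} (u v : vec n) : vec n := fun i => u i - v i.
Definition vscal {n} (a : R) (u : vec n) : vec n := fun i => a * u i.
Definition dot {n} (u v : vec n) : R := \big[Rplus/0]_(i < n) (u i * v i).
Definition vnorm {n} (u : vec n) : R := sqrt (dot u u).
Definition mulmv {n} (H : mat n) (v : vec n) : vec n :=
  fun i => \big[Rplus/0]_(j < n) (H i j * v j).
Definition quad {n} (H : mat n) (v : vec n) : R := dot v (mulmv H v).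
Definition mat_symmetric {n} (H : mat n) : Prop := forall i j, H i j = H j i.

Definition opnorm {n} (H : mat n) : R :=
  epsilon (inhabits 0)
    (fun c => is_lub (fun r => exists v : vec n, vnorm v <= 1 /\ r = vnorm (mulmv H v)) c).

Inductive ER := ERf (r : R) | ERinf.
Definition ERle (a b : ER) : Prop :=
  match a, b with
  | _, ERinf => True
  | ERinf, ERf _ => False
  | ERf x, ERf y => x <= y
  end.
Definition ERlt_r (c : R) (b : ER) : Prop :=
  match b with ERf y => c < y | ERinf => True end.
Definition ERadd (a b : ER) : ER :=
  match a, b with ERf x, ERf y => ERf (x + y) | _, _ => ERinf end.
Definition ERaddr (a : ER) (r : R) : ER := ERadd a (ERf r).
Definition ERscale (r : R) (a : ER) : ER :=
  match a with ERf x => ERf (r * x) | ERinf => ERinf end.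

Definition ext_convex {n} (psi : vec n -> ER) : Prop :=
  forall (x y : vec n) (a b lam : R), psi x = ERf a -> psi y = ERf b -> 0 <= lam <= 1 ->
    ERle (psi (vadd (vscal lam x) (vscal (1 - lam) y))) (ERf (lam * a + (1 - lam) * b)).
Definition ext_proper {n} (psi : vec n -> ER) : Prop := exists x r, psi x = ERf r.
Definition ext_closed {n} (psi : vec n -> ER) : Prop :=
  forall (x : vec n) (c : R), ERlt_r c (psi x) ->
    exists delta, 0 < delta /\ forall y, vnorm (vsub y x) < delta -> ERlt_r c (psi y).

Definition is_gradient {n} (f : vec n -> R) (g : vec n -> vec n) : Prop :=
  forall x eps, 0 < eps -> exists delta, 0 < delta /\
    forall h, vnorm h < delta -> Rabs (f (vadd x h) - f x - dot (g x) h) <= eps * vnorm h.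
Definition lipschitz_grad {n} (g : vec n -> vec n) (L : R) : Prop :=
  forall x y, vnorm (vsub (g x) (g y)) <= L * vnorm (vsub x y).
Definition convex_fun {n} (f : vec n -> R) : Prop :=
  forall x y lam, 0 <= lam <= 1 ->
    f (vadd (vscal lam x) (vscal (1 - lam) y)) <= lam * f x + (1 - lam) * f y.

Definition Fsum {n} (f : vec n -> R) (psi : vec n -> ER) (x : vec n) : ER :=
  ERaddr (psi x) (f x).

Definition is_inf_ER {n} (Q : vec n -> ER) (m : R) : Prop :=
  (forall d, ERle (ERf m) (Q d)) /\
  (forall b, (forall d, ERle (ERf b) (Q d)) -> b <= m).

Definition is_proj_onto {n} (Om : vec n -> Prop) (P : vec n -> vec n) : Prop :=
  forall x, Om (P x) /\ forall y, Om y -> vnorm (vsub x (P x)) <= vnorm (vsub x y).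

Definition opt_set_strongly_convex {n} (F : vec n -> ER) (Fstar : R)
    (P : vec n -> vec n) (mu : R) : Prop :=
  forall x lam Fx, F x = ERf Fx -> 0 <= lam <= 1 ->
    ERle (F (vadd (vscal lam x) (vscal (1 - lam) (P x))))
      (ERf (lam * Fx + (1 - lam) * Fstar
            - mu * lam * (1 - lam) / 2 * (vnorm (vsub x (P x))) ^ 2)).

(** psi(x+d) - psi(x) (psi(x) finite along the iterates). *)
Definition psidiff {n} (psi : vec n -> ER) (x d : vec n) : ER :=
  match psi x with ERf p => ERaddr (psi (vadd x d)) (- p) | ERinf => ERinf end.
Definition Qmodel {n} (g : vec n -> vec n) (psi : vec n -> ER) (H : mat n) (x d : vec n) : ER :=
  ERaddr (psidiff psi x d) (dot (g x) d + / 2 * quad H d).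
Definition Delta {n} (g : vec n -> vec n) (psi : vec n -> ER) (x d : vec n) : ER :=
  ERaddr (psidiff psi x d) (dot (g x) d).
Definition eta_inexact {n} (g : vec n -> vec n) (psi : vec n -> ER) (H : mat n)
    (x : vec n) (eta : R) (d : vec n) : Prop :=
  exists Qs, is_inf_ER (Qmodel g psi H x) Qs /\ ERle (Qmodel g psi H x d) (ERf ((1 - eta) * Qs)).

Definition ls_cond {n} (f : vec n -> R) (g : vec n -> vec n) (psi : vec n -> ER)
    (beta gamma : R) (x d : vec n) (j : nat) : Prop :=
  ERle (Fsum f psi (vadd x (vscal (pow beta j) d)))
       (ERadd (Fsum f psi x) (ERscale (pow beta j * gamma) (Delta g psi x d))).
Definition armijo_step {n} (f : vec n -> R) (g : vec n -> vec n) (psi : vec n -> ER)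
    (beta gamma : R) (x d : vec n) (alpha : R) : Prop :=
  exists i : nat, alpha = pow beta i /\ ls_cond f g psi beta gamma x d i /\
    forall j : nat, (j < i)%nat -> ~ ls_cond f g psi beta gamma x d j.

Definition cmin (eta beta gamma sigma L : R) : R :=
  Rmin (1 - eta) (2 * (1 - sqrt eta) * beta * (1 - gamma) * sigma / L).

(* Main.v *)
Require Import Defs.
From Stdlib Require Import Reals Lra Psatz FunctionalExtensionality ClassicalEpsilon.
From HB Require Import structures.
From mathcomp Require Import ssreflect ssrfun ssrbool eqtype ssrnat seq fintype bigop.
Open Scope R_scope.
Set Implicit Arguments.
Unset Strict Implicit.

Lemma Rplus_assoc' : associative Rplus.
Proof. by move=> a b c; rewrite Rplus_assoc. Qed.
HB.instance Definition _ := Monoid.isComLaw.Build R 0 Rplus Rplus_assoc' Rplus_comm Rplus_0_l.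

Lemma sumR_add n (F G : 'I_n -> R) :
  \big[Rplus/0]_(i < n) (F i + G i) = \big[Rplus/0]_(i < n) F i + \big[Rplus/0]_(i < n) G i.
Proof. by rewrite big_split. Qed.

Lemma sumR_scal n c (F : 'I_n -> R) :
  \big[Rplus/0]_(i < n) (c * F i) = c * \big[Rplus/0]_(i < n) F i.
Proof.
apply: (big_rec2 (fun y1 y2 => y1 = c * y2)); first ring.
by move=> i y1 y2 _ ->; ring.
Qed.

Lemma sumR_ge0 n (F : 'I_n -> R) : (forall i, 0 <= F i) -> 0 <= \big[Rplus/0]_(i < n) F i.
Proof.
move=> H; apply: (big_rec (fun y => 0 <= y)); first lra.
by move=> i y _ Hy; have := H i; lra.
Qed.

Lemma sumR_ext n (F G : 'I_n -> R) : (forall i, F i = G i) ->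
  \big[Rplus/0]_(i < n) F i = \big[Rplus/0]_(i < n) G i.
Proof. by move=> H; apply: eq_bigr => i _; apply: H. Qed.

Lemma dot_comm n (u v : vec n) : dot u v = dot v u.
Proof. rewrite /dot; apply: sumR_ext => i; ring. Qed.
Lemma dot_addl n (u v w : vec n) : dot (vadd u v) w = dot u w + dot v w.
Proof. rewrite /dot -sumR_add; apply: sumR_ext => i; rewrite /vadd; ring. Qed.
Lemma dot_addr n (u v w : vec n) : dot w (vadd u v) = dot w u + dot w v.
Proof. rewrite /dot -sumR_add; apply: sumR_ext => i; rewrite /vadd; ring. Qed.
Lemma dot_subl n (u v w : vec n) : dot (vsub u v) w = dot u w - dot v w.
Proof.
rewrite /dot.
transitivity (\big[Rplus/0]_(i < n) (u i * w i + (-1) * (v i * w i))).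
  apply: sumR_ext => i; rewrite /vsub; ring.
rewrite sumR_add sumR_scal; ring.
Qed.
Lemma dot_subr n (u v w : vec n) : dot w (vsub u v) = dot w u - dot w v.
Proof. by rewrite dot_comm dot_subl !(dot_comm w). Qed.
Lemma dot_scall n c (u w : vec n) : dot (vscal c u) w = c * dot u w.
Proof. rewrite /dot -sumR_scal; apply: sumR_ext => i; rewrite /vscal; ring. Qed.
Lemma dot_scalr n c (u w : vec n) : dot w (vscal c u) = c * dot w u.
Proof. by rewrite dot_comm dot_scall dot_comm. Qed.
Lemma dot_ge0 n (u : vec n) : 0 <= dot u u.
Proof. apply: sumR_ge0 => i; nra. Qed.

Lemma vnorm_ge0 n (u : vec n) : 0 <= vnorm u.
Proof. apply: sqrt_pos. Qed.
Lemma vnorm_sq n (u : vec n) : vnorm u ^ 2 = dot u u.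
Proof. rewrite /vnorm /= Rmult_1_r sqrt_sqrt //; apply: dot_ge0. Qed.
Lemma vnorm_scal n c (u : vec n) : vnorm (vscal c u) = Rabs c * vnorm u.
Proof.
rewrite /vnorm dot_scall dot_scalr -Rmult_assoc sqrt_mult.
- by rewrite -/(Rsqr c) sqrt_Rsqr_abs.
- nra.
- apply: dot_ge0.
Qed.

Lemma mulmv_add n (H : mat n) u v : mulmv H (vadd u v) = vadd (mulmv H u) (mulmv H v).
Proof.
apply: functional_extensionality => i; rewrite /mulmv /vadd -sumR_add.
apply: sumR_ext => j; ring.
Qed.
Lemma mulmv_scal n (H : mat n) c u : mulmv H (vscal c u) = vscal c (mulmv H u).
Proof.
apply: functional_extensionality => i; rewrite /mulmv /vscal -sumR_scal.
apply: sumR_ext => j; ring.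
Qed.

Lemma dot_mulmv_sym n (H : mat n) u v : mat_symmetric H ->
  dot u (mulmv H v) = dot v (mulmv H u).
Proof.
move=> HS; rewrite /dot /mulmv.
transitivity (\big[Rplus/0]_(i < n) \big[Rplus/0]_(j < n) (u i * H i j * v j)).
  apply: sumR_ext => i; rewrite -sumR_scal; apply: sumR_ext => j; ring.
rewrite exchange_big /=.
apply: sumR_ext => j; rewrite -sumR_scal; apply: sumR_ext => i; rewrite HS; ring.
Qed.

Lemma quad_scal n (H : mat n) c u : quad H (vscal c u) = c ^ 2 * quad H u.
Proof. rewrite /quad mulmv_scal dot_scall dot_scalr; ring. Qed.

Lemma quad_expand n (H : mat n) u v t : mat_symmetric H ->
  quad H (vadd u (vscal t v)) = quad H u + 2 * t * dot u (mulmv H v) + t ^ 2 * quad H v.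
Proof.
move=> HS; rewrite /quad mulmv_add mulmv_scal dot_addl !dot_addr !dot_scall !dot_scalr.
rewrite (dot_mulmv_sym v u HS); ring.
Qed.

Lemma cs_gen a b c : (forall t, 0 <= a + 2 * t * b + t ^ 2 * c) -> b ^ 2 <= a * c.
Proof.
move=> H.
have Ha : 0 <= a by have := H 0; lra.
have Hc : 0 <= c.
  destruct (Rle_or_lt 0 c) as [|Hc] => //.
  pose t := (2 * Rabs b + a + 1) / (- c) + a + 1.
  have Ht : t * (- c) = (2 * Rabs b + a + 1) + (a + 1) * (- c) by rewrite /t; field; lra.
  have H1 := H t.
  move: (Rabs_pos b) (Rle_abs b) => h1 h2.
  have Ht1 : a + 1 <= t.
    rewrite /t; have : 0 <= (2 * Rabs b + a + 1) / (- c) by apply: Rmult_le_pos; [lra| apply/Rlt_le/Rinv_0_lt_compat; lra].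
    lra.
  have E : t ^ 2 * c = - (t * (t * (- c))) by ring.
  rewrite Ht in E.
  have : t * ((2 * Rabs b + a + 1) + (a + 1) * - c) >= t * (2 * Rabs b + 1) by apply: Rmult_ge_compat_l; nra.
  have : 2 * t * b <= 2 * t * Rabs b by apply: Rmult_le_compat_l; lra.
  nra.
destruct (Rle_or_lt c 0) as [Hc0|Hc0].
  have Hc' : c = 0 by lra. subst c.
  destruct (Req_dec b 0) as [->|Hb]; first lra.
  have := H (- (a + 1) / (2 * b)). intro H1.
  have : 2 * (- (a + 1) / (2 * b)) * b = - (a + 1) by field.
  nra.
have := H (- b / c).
have : (- b / c) ^ 2 * c = b ^ 2 / c by field; lra.
have : 2 * (- b / c) * b = - 2 * (b ^ 2 / c) by field; lra.
move=> e1 e2 h.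
have : 0 <= a - b ^ 2 / c by lra.
move=> h'. have : b ^ 2 / c * c = b ^ 2 by field; lra.
nra.
Qed.

Lemma dot_cs n (u v : vec n) : dot u v <= vnorm u * vnorm v.
Proof.
have H : dot u v ^ 2 <= dot u u * dot v v.
  apply: cs_gen => t.
  have := dot_ge0 (vadd u (vscal t v)).
  rewrite dot_addl !dot_addr !dot_scall !dot_scalr (dot_comm v u); lra.
rewrite -!vnorm_sq in H.
have := vnorm_ge0 u; have := vnorm_ge0 v.
destruct (Rle_or_lt (dot u v) 0); first nra.
move=> h1 h2.
apply: Rsqr_incr_0_var; last nra.
rewrite /Rsqr; nra.
Qed.


Lemma Hnorm_bound n (H : mat n) M : mat_symmetric H ->
  (forall v, 0 <= quad H v <= M * vnorm v ^ 2) -> 0 <= M ->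
  forall v, vnorm (mulmv H v) <= M * vnorm v.
Proof.
move=> HS HQ HM v.
set u := mulmv H v.
have CS : dot u (mulmv H v) ^ 2 <= quad H u * quad H v.
  apply: cs_gen => t; rewrite -quad_expand //; exact: (proj1 (HQ _)).
have E : dot u (mulmv H v) = vnorm u ^ 2 by rewrite vnorm_sq.
rewrite E in CS.
have h1 := HQ u; have h2 := HQ v.
have hu := vnorm_ge0 u; have hv := vnorm_ge0 v.
have : quad H u * quad H v <= (M * vnorm u ^ 2) * (M * vnorm v ^ 2).
  apply: Rmult_le_compat; lra.
move=> h3.
destruct (Req_dec (vnorm u) 0) as [->|hne].
  nra.
have hpos : 0 < vnorm u ^ 2 by nra.
have : vnorm u ^ 2 <= (M * vnorm v) ^ 2.
  apply: (Rmult_le_reg_l (vnorm u ^ 2)) => //. nra.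
have hmv : 0 <= M * vnorm v by nra.
move=> hsq. destruct (Rle_or_lt (vnorm u) (M * vnorm v)) as [|hlt] => //.
have : (M * vnorm v) ^ 2 < vnorm u ^ 2 by nra.
lra.
Qed.

Definition opset n (H : mat n) := (fun r => exists v : vec n, vnorm v <= 1 /\ r = vnorm (mulmv H v)).

Lemma zero_vnorm n : vnorm (fun _ : 'I_n => 0) = 0.
Proof.
have E : (fun _ : 'I_n => 0) = vscal 0 (fun _ : 'I_n => 0).
  by apply: functional_extensionality => i; rewrite /vscal; ring.
rewrite E vnorm_scal Rabs_R0; ring.
Qed.

Lemma opnorm_props n (H : mat n) M : 0 <= M ->
  (forall v, vnorm (mulmv H v) <= M * vnorm v) ->
  0 <= opnorm H /\ opnorm H <= M /\ forall v, vnorm (mulmv H v) <= opnorm H * vnorm v.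
Proof.
move=> HM HB.
have Hlub : is_lub (opset H) (opnorm H).
  rewrite /opnorm; apply: epsilon_spec.
  have Hz : opset H (vnorm (mulmv H (fun _ => 0))).
    by exists (fun _ => 0); split => //; rewrite zero_vnorm; lra.
  have Hb : bound (opset H).
    exists M => r [v [h1 h2]]; rewrite h2; have := HB v; have := vnorm_ge0 v; nra.
  have [m Hm] := completeness (opset H) Hb (ex_intro _ _ Hz).
  by exists m.
have [Hub Hleast] := Hlub.
have H0 : 0 <= opnorm H.
  have Hz : opset H (vnorm (mulmv H (fun _ => 0))).
    by exists (fun _ => 0); split => //; rewrite zero_vnorm; lra.
  apply: Rle_trans (Hub _ Hz); apply: vnorm_ge0.
split => //; split.
  apply: Hleast => r [v [h1 ->]]; have := HB v; have := vnorm_ge0 v; nra.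
move=> v.
destruct (Req_dec (vnorm v) 0) as [E|E].
  have := HB v; rewrite E; have := vnorm_ge0 (mulmv H v); nra.
have hv : 0 < vnorm v by have := vnorm_ge0 v; lra.
have Hs : opset H (vnorm (mulmv H (vscal (/ vnorm v) v))).
  exists (vscal (/ vnorm v) v); split => //.
  rewrite vnorm_scal Rabs_right; [rewrite Rinv_l; lra | apply/Rle_ge/Rlt_le/Rinv_0_lt_compat; lra].
have := Hub _ Hs.
rewrite mulmv_scal vnorm_scal Rabs_right; last by apply/Rle_ge/Rlt_le/Rinv_0_lt_compat.
move=> h.
have : / vnorm v * vnorm (mulmv H v) * vnorm v <= opnorm H * vnorm v by apply: Rmult_le_compat_r; lra.
have : / vnorm v * vnorm (mulmv H v) * vnorm v = vnorm (mulmv H v) by field; lra.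
lra.
Qed.

Lemma quad_opnorm n (H : mat n) M : 0 <= M ->
  (forall v, vnorm (mulmv H v) <= M * vnorm v) ->
  forall v, quad H v <= opnorm H * vnorm v ^ 2.
Proof.
move=> HM HB v.
have [_ [_ h]] := opnorm_props HM HB.
have := dot_cs v (mulmv H v); rewrite /quad => h1.
have := h v; have := vnorm_ge0 v; nra.
Qed.


Lemma vadd_line n (x h : vec n) t s :
  vadd x (vscal (t + s) h) = vadd (vadd x (vscal t h)) (vscal s h).
Proof. apply: functional_extensionality => i; rewrite /vadd /vscal; ring. Qed.

Lemma deriv_line n (f : vec n -> R) g x h t : is_gradient f g ->
  derivable_pt_lim (fun t => f (vadd x (vscal t h))) t (dot (g (vadd x (vscal t h))) h).
Proof.
move=> Hg eps He.
set y := vadd x (vscal t h).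
set K := vnorm h + 1.
have hK : 0 < K by rewrite /K; have := vnorm_ge0 h; lra.
have [del [hdel Hd]] := Hg y (eps / (2 * K)) ltac:(apply: Rdiv_lt_0_compat; lra).
have hdK : 0 < del / K by apply: Rdiv_lt_0_compat.
exists (mkposreal _ hdK) => s hs0 hs /=.
rewrite /= in hs.
have Hn : vnorm (vscal s h) < del.
  rewrite vnorm_scal.
  have : Rabs s * vnorm h <= Rabs s * K by apply: Rmult_le_compat_l; [apply: Rabs_pos| rewrite /K; lra].
  have : Rabs s * K < del / K * K by apply: Rmult_lt_compat_r.
  have : del / K * K = del by field; repeat split; lra.
  lra.
have := Hd _ Hn.
rewrite -vadd_line -/y dot_scalr vnorm_scal.
move=> hb.
have Ea : (f (vadd x (vscal (t + s) h)) - f y) / s - dot (g y) h =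
   (f (vadd x (vscal (t + s) h)) - f y - s * dot (g y) h) * / s by field.
rewrite Ea Rabs_mult Rabs_inv.
have hsa : 0 < Rabs s by apply: Rabs_pos_lt.
have : Rabs (f (vadd x (vscal (t + s) h)) - f y - s * dot (g y) h) * / Rabs s <= eps / (2 * K) * Rabs s * vnorm h * / Rabs s.
  apply: Rmult_le_compat_r; [apply/Rlt_le/Rinv_0_lt_compat |] ; lra.
have : eps / (2 * K) * Rabs s * vnorm h * / Rabs s = eps / 2 * (vnorm h / K) by field; repeat split; lra.
have : vnorm h / K < 1.
  apply: (Rmult_lt_reg_r K) => //. have : vnorm h / K * K = vnorm h by field; lra. rewrite /K; lra.
have := vnorm_ge0 h. move=> h0 h1 h2 h3.
have : 0 <= vnorm h / K by apply: Rmult_le_pos; [lra| apply/Rlt_le/Rinv_0_lt_compat; lra].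
nra.
Qed.

Lemma descent n (f : vec n -> R) g L x h t : is_gradient f g -> lipschitz_grad g L -> 0 <= L -> 0 <= t ->
  f (vadd x (vscal t h)) <= f x + t * dot (g x) h + L / 2 * t ^ 2 * vnorm h ^ 2.
Proof.
move=> Hg HL HL0 Ht.
have E0 : vadd x (vscal 0 h) = x.
  by apply: functional_extensionality => i; rewrite /vadd /vscal; ring.
destruct (Req_dec t 0) as [->|Ht0].
  rewrite E0; lra.
set a := dot (g x) h.
set b := L / 2 * vnorm h ^ 2.
set phi := fun t => f (vadd x (vscal t h)).
have tpos : 0 < t by lra.
have Hder : forall c, 0 <= c <= t -> derivable_pt_lim (phi - mult_real_fct a id - mult_real_fct b (fun s => s ^ 2))%F c
   (dot (g (vadd x (vscal c h))) h - a * 1 - b * (INR 2 * c ^ Nat.pred 2)).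
  move=> c _; apply: derivable_pt_lim_minus; [apply: derivable_pt_lim_minus|].
  - exact: deriv_line.
  - apply: derivable_pt_lim_scal; apply: derivable_pt_lim_id.
  - apply: derivable_pt_lim_scal; apply: derivable_pt_lim_pow.
have [c [Hc Hcr]] := MVT_cor2 _ _ _ _ tpos Hder.
move: Hc; rewrite /minus_fct /mult_real_fct /phi /id E0 /=.
have Hd : dot (g (vadd x (vscal c h))) h - a <= L * c * vnorm h ^ 2.
  rewrite /a -dot_subl.
  apply: Rle_trans (dot_cs _ _) _.
  have E1 : vsub (vadd x (vscal c h)) x = vscal c h.
    by apply: functional_extensionality => i; rewrite /vsub /vadd /vscal; ring.
  have := HL (vadd x (vscal c h)) x; rewrite E1 vnorm_scal Rabs_right; last lra.
  have := vnorm_ge0 h; have := vnorm_ge0 (vsub (g (vadd x (vscal c h))) (g x)); nra.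
have : (dot (g (vadd x (vscal c h))) h - a * 1 - b * (2 * (c * 1))) * (t - 0) <= 0.
  have : dot (g (vadd x (vscal c h))) h - a * 1 - b * (2 * (c * 1)) <= 0 by rewrite /b; nra.
  nra.
rewrite /b; nra.
Qed.

Lemma grad_ineq n (f : vec n -> R) g x y : is_gradient f g -> convex_fun f ->
  f x + dot (g x) (vsub y x) <= f y.
Proof.
move=> Hg Hc.
set h := vsub y x.
have E0 : vadd x (vscal 0 h) = x.
  by apply: functional_extensionality => i; rewrite /vadd /vscal; ring.
destruct (Rle_or_lt (f x + dot (g x) h) (f y)) as [|Hlt] => //.
exfalso.
have D := deriv_line x h 0 Hg.
rewrite E0 in D.
have [del Hd] := D (f x + dot (g x) h - f y) ltac:(lra).
set s := Rmin (del / 2) 1.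
have hd := cond_pos del.
have hs : 0 < s by apply: Rmin_pos; lra.
have hs1 : s <= 1 by apply: Rmin_r.
have hs2 : s <= del / 2 by apply: Rmin_l.
have := Hd s ltac:(lra) ltac:(rewrite Rabs_right; lra).
rewrite Rplus_0_l E0.
have Ec : vadd (vscal s y) (vscal (1 - s) x) = vadd x (vscal s h).
  by apply: functional_extensionality => i; rewrite /vadd /vscal /h /vsub; ring.
have := Hc y x s ltac:(lra). rewrite Ec => hc.
have : (f (vadd x (vscal s h)) - f x) / s <= f y - f x.
  apply: (Rmult_le_reg_r s) => //.
  have : (f (vadd x (vscal s h)) - f x) / s * s = f (vadd x (vscal s h)) - f x by field; repeat split; lra.
  nra.
move=> h1 h2.
have := Rle_abs ((f (vadd x (vscal s h)) - f x) / s - dot (g x) h).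
have := Rabs_Ropp ((f (vadd x (vscal s h)) - f x) / s - dot (g x) h).
have := Rle_abs (- ((f (vadd x (vscal s h)) - f x) / s - dot (g x) h)).
lra.
Qed.


Lemma real_key Qs D A eta : 0 <= eta < 1 -> 0 <= A ->
  (forall l, 0 <= l <= 1 -> Qs <= l * D + l ^ 2 * A / 2) ->
  D + A / 2 <= (1 - eta) * Qs -> D <= - A / (1 + sqrt eta).
Proof.
move=> He HA Hl HD.
set s := sqrt eta.
have hs0 : 0 <= s by apply: sqrt_pos.
have hss : s * s = eta by rewrite /s sqrt_sqrt; lra.
have hs1 : s < 1 by nra.
destruct (Req_dec s 0) as [Hs|Hs].
  have he0 : eta = 0 by nra.
  rewrite Hs he0 in HD *.
  have h0 := Hl 0 ltac:(lra).
  destruct (Req_dec A 0) as [HA0|HA0].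
    rewrite HA0 in HD h0 *. have : - 0 / (1 + 0) = 0 by field. lra.
  have hA : 0 < A by lra.
  have : - A / (1 + 0) = - A by field.
  move=> ->.
  destruct (Rle_or_lt D (- A)) as [|Hlt] => //.
  exfalso.
  have hDn : D <= - A / 2 by nra.
  have hl := Hl (- D / A).
  have e1 : - D / A * A = - D by field; lra.
  have hl0 : 0 <= - D / A.
    apply: Rmult_le_pos; [lra | apply/Rlt_le/Rinv_0_lt_compat; lra].
  have hl1 : - D / A <= 1.
    apply: (Rmult_le_reg_r A) => //; lra.
  have := hl (conj hl0 hl1).
  have : - D / A * D + (- D / A) ^ 2 * A / 2 = - (D * D) / (2 * A) by field; lra.
  move=> -> h.
  have : - (D * D) / (2 * A) * (2 * A) = - (D * D) by field; lra.
  nra.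
have hsp : 0 < s by lra.
have hl := Hl (/ (1 + s)).
have hw0 : 0 < / (1 + s) by apply: Rinv_0_lt_compat; lra.
have hw1 : / (1 + s) <= 1.
  rewrite -Rinv_1; apply: Rinv_le_contravar; lra.
have := hl (conj (Rlt_le _ _ hw0) hw1).
move=> h.
have h2 : (1 - eta) * Qs <= (1 - eta) * (/ (1 + s) * D + (/ (1 + s)) ^ 2 * A / 2).
  apply: Rmult_le_compat_l => //; lra.
have e : (1 - eta) * (/ (1 + s) * D + (/ (1 + s)) ^ 2 * A / 2) = (1 - s) * D + (1 - s) * A / (2 * (1 + s)).
  rewrite -hss; field; lra.
rewrite e in h2.
have h3 : s * D <= - s * A / (1 + s).
  have : (1 - s) * A / (2 * (1 + s)) - A / 2 = - s * A / (1 + s) by field; lra.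
  lra.
have e2 : - s * A / (1 + s) = s * (- A / (1 + s)) by field; lra.
rewrite e2 in h3.
apply: (Rmult_le_reg_l s) => //.
Qed.

Lemma Qmodel_fin n g (psi : vec n -> ER) H x p d q : psi x = ERf p -> psi (vadd x d) = ERf q ->
  Qmodel g psi H x d = ERf (q - p + (dot (g x) d + / 2 * quad H d)).
Proof. by move=> Hp Hq; rewrite /Qmodel /psidiff Hp Hq /ERaddr /ERadd. Qed.

Lemma model_bound n g (psi : vec n -> ER) H x eta d p : psi x = ERf p -> ext_convex psi ->
  0 <= eta < 1 -> (forall v, 0 <= quad H v) -> eta_inexact g psi H x eta d ->
  exists pd Qs, psi (vadd x d) = ERf pd /\ is_inf_ER (Qmodel g psi H x) Qs /\
   (pd - p + dot (g x) d) + quad H d / 2 <= (1 - eta) * Qs /\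
   pd - p + dot (g x) d <= - quad H d / (1 + sqrt eta).
Proof.
move=> Hp Hcv He HQ [Qs [[Hinf Hsup] Hd]].
case Epd: (psi (vadd x d)) => [pd|]; last first.
  by move: Hd; rewrite /Qmodel /psidiff Hp Epd.
exists pd, Qs; split => //; split; first by [].
move: Hd; rewrite (@Qmodel_fin _ g psi H x p d pd Hp Epd) /= => Hd.
have H1 : pd - p + dot (g x) d + quad H d / 2 <= (1 - eta) * Qs by lra.
split => //.
apply: (real_key (Qs := Qs)); [exact: He| exact: HQ| |exact: H1].
move=> l hl.
have Ev : vadd (vscal l (vadd x d)) (vscal (1 - l) x) = vadd x (vscal l d).
  by apply: functional_extensionality => i; rewrite /vadd /vscal; ring.
have := Hcv _ _ _ _ l Epd Hp hl.
rewrite Ev.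
case Eq: (psi (vadd x (vscal l d))) => [q|] //= hq.
have := Hinf (vscal l d).
rewrite (@Qmodel_fin _ g psi H x p (vscal l d) q Hp Eq) /= quad_scal dot_scalr => h.
nra.
Qed.

Lemma ls_cond_iff n f g (psi : vec n -> ER) beta gamma x d j p pd :
  psi x = ERf p -> psi (vadd x d) = ERf pd ->
  (ls_cond f g psi beta gamma x d j <->
   exists q, psi (vadd x (vscal (beta ^ j) d)) = ERf q /\
     q + f (vadd x (vscal (beta ^ j) d)) <= p + f x + beta ^ j * gamma * (pd - p + dot (g x) d)).
Proof.
move=> Hp Hpd.
rewrite /ls_cond /Fsum /Defs.Delta /psidiff Hp /= Hpd /=.
case E: (psi (vadd x (vscal (beta ^ j) d))) => [q|] /=.
  split; [move=> h; exists q; split => //; lra | move=> [q' [[<-] h]]; lra].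
split => // [[q' [h _]]] //.
Qed.

Lemma accept n f g (psi : vec n -> ER) L x d p pd alpha gamma :
  psi x = ERf p -> psi (vadd x d) = ERf pd -> ext_convex psi -> is_gradient f g ->
  lipschitz_grad g L -> 0 <= L -> 0 < alpha <= 1 ->
  L * alpha * vnorm d ^ 2 / 2 <= (1 - gamma) * (- (pd - p + dot (g x) d)) ->
  exists q, psi (vadd x (vscal alpha d)) = ERf q /\
    q + f (vadd x (vscal alpha d)) <= p + f x + alpha * gamma * (pd - p + dot (g x) d).
Proof.
move=> Hp Hpd Hcv Hg HL HL0 Ha Hc.
have Ev : vadd (vscal alpha (vadd x d)) (vscal (1 - alpha) x) = vadd x (vscal alpha d).
  by apply: functional_extensionality => i; rewrite /vadd /vscal; ring.
have := Hcv _ _ _ _ alpha Hpd Hp ltac:(lra).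
rewrite Ev.
case Eq: (psi (vadd x (vscal alpha d))) => [q|] //= hq.
exists q; split => //.
have := descent x d Hg HL HL0 (Rlt_le _ _ (proj1 Ha)).
have : L / 2 * alpha ^ 2 * vnorm d ^ 2 = alpha * (L * alpha * vnorm d ^ 2 / 2) by field.
move=> ->.
have : alpha * (L * alpha * vnorm d ^ 2 / 2) <= alpha * ((1 - gamma) * - (pd - p + dot (g x) d)).
  apply: Rmult_le_compat_l; lra.
nra.
Qed.

Lemma alpha_bound n f g (psi : vec n -> ER) L x d p pd alpha beta gamma eta sigma A :
  psi x = ERf p -> psi (vadd x d) = ERf pd -> ext_convex psi -> is_gradient f g ->
  lipschitz_grad g L -> 0 < L -> 0 < beta < 1 -> 0 < gamma < 1 -> 0 <= eta < 1 -> 0 < sigma ->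
  sigma * vnorm d ^ 2 <= A ->
  pd - p + dot (g x) d <= - A / (1 + sqrt eta) ->
  armijo_step f g psi beta gamma x d alpha ->
  0 < alpha <= 1 /\ cmin eta beta gamma sigma L <= alpha * (1 - eta) /\
  exists q, psi (vadd x (vscal alpha d)) = ERf q /\
    q + f (vadd x (vscal alpha d)) <= p + f x + alpha * gamma * (pd - p + dot (g x) d).
Proof.
move=> Hp Hpd Hcv Hg HL HL0 Hb Hgm He Hs HA HD [i [-> [Hi Hlt]]].
have Hpos : forall j, 0 < beta ^ j by move=> j; apply: pow_lt; lra.
have Hle1 : forall j, beta ^ j <= 1 by move=> j; rewrite -(pow1 j); apply: pow_incr; lra.
set s := sqrt eta.
have hs0 : 0 <= s by apply: sqrt_pos.
have hss : s * s = eta by rewrite /s sqrt_sqrt; lra.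
have hs1 : s < 1 by nra.
set c2 := 2 * (1 - s) * beta * (1 - gamma) * sigma / L.
have Hc2 : 0 < c2 by rewrite /c2; apply: Rdiv_lt_0_compat => //; repeat apply: Rmult_lt_0_compat; lra.
split; first by split; [apply: Hpos| apply: Hle1].
split; last by apply/(ls_cond_iff _ _ _ _ _ Hp Hpd).
rewrite /cmin -/s -/c2.
destruct i as [|i].
  rewrite /= ; have := Rmin_l (1 - eta) c2; lra.
apply: Rle_trans (Rmin_r _ _) _.
have Hfail := Hlt i (ltnSn i).
have Hbig : 2 * (1 - gamma) * sigma / (L * (1 + s)) < beta ^ i.
  destruct (Rle_or_lt (beta ^ i) (2 * (1 - gamma) * sigma / (L * (1 + s)))) as [Hle|] => //.
  exfalso; apply: Hfail; apply/(ls_cond_iff _ _ _ _ _ Hp Hpd).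
  apply: (accept Hp Hpd Hcv Hg HL (Rlt_le _ _ HL0)); first by split; [apply: Hpos| apply: Hle1].
  have hdA : vnorm d ^ 2 <= A / sigma.
    apply: (Rmult_le_reg_l sigma) => //. have : sigma * (A / sigma) = A by field; lra. lra.
  have hnd := pow2_ge_0 (vnorm d).
  have e1 : L * (2 * (1 - gamma) * sigma / (L * (1 + s))) * (A / sigma) / 2 = (1 - gamma) * (A / (1 + s)).
    field; lra.
  have h1 : L * beta ^ i * vnorm d ^ 2 / 2 <= L * (2 * (1 - gamma) * sigma / (L * (1 + s))) * (A / sigma) / 2.
    have := Hpos i.
    move=> hp.
    have : L * beta ^ i * vnorm d ^ 2 <= L * (2 * (1 - gamma) * sigma / (L * (1 + s))) * (A / sigma).
      apply: Rmult_le_compat; try nra.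
    lra.
  have e2 : - A / (1 + s) = - (A / (1 + s)) by field; lra.
  rewrite e2 in HD.
  nra.
rewrite /c2 /=.
have e3 : 1 - eta = (1 - s) * (1 + s) by nra.
rewrite e3.
have e4 : 2 * (1 - s) * beta * (1 - gamma) * sigma / L = beta * (1 - s) * (1 + s) * (2 * (1 - gamma) * sigma / (L * (1 + s))) by field; lra.
rewrite e4.
have : 0 <= beta * (1 - s) * (1 + s) by apply: Rmult_le_pos; [nra | lra].
nra.
Qed.


Lemma Q_opt_bound n f g (psi : vec n -> ER) Fstar P mu H x p Qs l :
  psi x = ERf p -> is_gradient f g -> convex_fun f ->
  opt_set_strongly_convex (Fsum f psi) Fstar P mu ->
  is_inf_ER (Qmodel g psi H x) Qs -> 0 <= l <= 1 ->
  Qs <= - l * (p + f x - Fstar) - mu * l * (1 - l) / 2 * vnorm (vsub x (P x)) ^ 2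
        + l ^ 2 / 2 * quad H (vsub x (P x)).
Proof.
move=> Hp Hg Hcf Hosc [Hinf _] Hl.
set z := vadd (vscal (1 - l) x) (vscal (1 - (1 - l)) (P x)).
have HFx : Fsum f psi x = ERf (p + f x) by rewrite /Fsum Hp.
have := Hosc x (1 - l) (p + f x) HFx ltac:(lra).
rewrite -/z /Fsum.
case Ez: (psi z) => [qz|] //= hz.
have Ev : vadd x (vsub z x) = z.
  by apply: functional_extensionality => i; rewrite /vadd /vsub; ring.
have Ez' : psi (vadd x (vsub z x)) = ERf qz by rewrite Ev.
have := Hinf (vsub z x).
rewrite (@Qmodel_fin _ g psi H x p (vsub z x) qz Hp Ez') /= => hq.
have hgi := grad_ineq x z Hg Hcf.
have Ed : vsub z x = vscal (- l) (vsub x (P x)).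
  by apply: functional_extensionality => i; rewrite /vsub /vscal /z /vadd /vscal; ring.
rewrite Ed quad_scal in hq.
rewrite Ed in hgi.
have : (- l) ^ 2 = l ^ 2 by ring.
move=> e. rewrite e in hq.
have e2 : 1 - (1 - l) = l by ring.
rewrite e2 in hz.
nra.
Qed.

Lemma step n (f : vec n -> R) g (psi : vec n -> ER) L Fstar P mu eta beta gamma sigma M
  x H d alpha p :
  0 < L -> is_gradient f g -> lipschitz_grad g L -> ext_convex psi ->
  convex_fun f -> 0 < mu -> opt_set_strongly_convex (Fsum f psi) Fstar P mu ->
  0 < beta < 1 -> 0 < gamma < 1 -> 0 <= eta < 1 ->
  psi x = ERf p -> mat_symmetric H -> 0 < sigma -> sigma <= M ->
  (forall v, sigma * (vnorm v) ^ 2 <= quad H v <= M * (vnorm v) ^ 2) ->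
  eta_inexact g psi H x eta d ->
  armijo_step f g psi beta gamma x d alpha ->
  exists q, psi (vadd x (vscal alpha d)) = ERf q /\
   let Fk := p + f x in let Fk1 := q + f (vadd x (vscal alpha d)) in
    Fk1 - Fstar <= (1 - alpha * gamma * (1 - eta) * mu / (mu + opnorm H)) * (Fk - Fstar) /\
    1 - alpha * gamma * (1 - eta) * mu / (mu + opnorm H)
      <= 1 - gamma * mu / (mu + M) * cmin eta beta gamma sigma L /\
    (quad H (vsub x (P x)) <= Fk - Fstar ->
       Fk1 - Fstar <= (1 - (1 - eta) * gamma * alpha / 2) * (Fk - Fstar) /\
       1 - (1 - eta) * gamma * alpha / 2 <= 1 - gamma / 2 * cmin eta beta gamma sigma L).
Proof.
move=> HL0 Hg HL Hcv Hcf Hmu Hosc Hb Hgm He Hp HS Hs HsM HQ Hin Harm.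
have HQ0 : forall v, 0 <= quad H v.
  move=> v; have := HQ v; have := pow2_ge_0 (vnorm v); nra.
have [pd [Qs [Hpd [Hinf [H1 H2]]]]] := model_bound Hp Hcv He HQ0 Hin.
have HA : sigma * vnorm d ^ 2 <= quad H d by apply: (proj1 (HQ d)).
have [Ha [Hcm [q [Hq Hdec]]]] := alpha_bound Hp Hpd Hcv Hg HL HL0 Hb Hgm He Hs HA H2 Harm.
exists q; split => //.
move=> Fk Fk1.
set D := pd - p + dot (g x) d.
have HD : D <= (1 - eta) * Qs by rewrite /D; have := HQ0 d; lra.
set N := opnorm H.
have HM0 : 0 <= M by lra.
have HB : forall v, vnorm (mulmv H v) <= M * vnorm v.
  apply: Hnorm_bound => // v; have := HQ0 v; have := HQ v; lra.
have [HN0 [HNM _]] := opnorm_props HM0 HB.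
have Hqx := quad_opnorm HM0 HB (vsub x (P x)).
rewrite -/N in HN0 HNM Hqx.
set r := vnorm (vsub x (P x)).
rewrite -/r in Hqx.
set Qx := quad H (vsub x (P x)).
rewrite -/Qx in Hqx.
have Hkey : forall l, 0 <= l <= 1 ->
   Qs <= - l * (Fk - Fstar) - mu * l * (1 - l) / 2 * r ^ 2 + l ^ 2 / 2 * Qx.
  by move=> l hl; apply: (Q_opt_bound Hp Hg Hcf Hosc Hinf hl).
have Hdec' : Fk1 <= Fk + alpha * gamma * D by rewrite /Fk1 /Fk /D; lra.
have Hag : 0 <= alpha * gamma * (1 - eta) by apply: Rmult_le_pos; [nra| lra].
have HagQ : alpha * gamma * D <= alpha * gamma * (1 - eta) * Qs.
  have : 0 <= alpha * gamma by nra.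
  move=> h; have := Rmult_le_compat_l _ _ _ h HD.
  have : alpha * gamma * ((1 - eta) * Qs) = alpha * gamma * (1 - eta) * Qs by ring.
  lra.
split.
  set l := mu / (mu + N).
  have hl0 : 0 < l by apply: Rdiv_lt_0_compat; lra.
  have hl1 : l <= 1.
    apply: (Rmult_le_reg_r (mu + N)); first lra.
    rewrite /l; have : mu / (mu + N) * (mu + N) = mu by field; lra.
    lra.
  have hk := Hkey l (conj (Rlt_le _ _ hl0) hl1).
  have e : l * (mu + N) = mu by rewrite /l; field; lra.
  have hr := pow2_ge_0 r.
  have hQs : Qs <= - l * (Fk - Fstar).
    have : l ^ 2 / 2 * Qx <= l ^ 2 / 2 * (N * r ^ 2).
      apply: Rmult_le_compat_l => //; nra.
    have : - mu * l * (1 - l) / 2 * r ^ 2 + l ^ 2 / 2 * (N * r ^ 2) = l * r ^ 2 / 2 * (l * (mu + N) - mu) by field.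
    rewrite e. have : l * r ^ 2 / 2 * (mu - mu) = 0 by ring.
    lra.
  have : alpha * gamma * (1 - eta) * Qs <= alpha * gamma * (1 - eta) * (- l * (Fk - Fstar)).
    by apply: Rmult_le_compat_l.
  have e2 : alpha * gamma * (1 - eta) * mu / (mu + N) = alpha * gamma * (1 - eta) * l.
    by rewrite /l; field; lra.
  rewrite e2.
  nra.
split.
  have hK1 : 0 <= gamma * mu / (mu + M).
    apply: Rmult_le_pos; [nra| apply/Rlt_le/Rinv_0_lt_compat; lra].
  have hK12 : gamma * mu / (mu + M) <= gamma * mu / (mu + N).
    apply: Rmult_le_compat_l; first nra.
    apply: Rinv_le_contravar; lra.
  have h1 : gamma * mu / (mu + M) * cmin eta beta gamma sigma L <= gamma * mu / (mu + M) * (alpha * (1 - eta)).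
    by apply: Rmult_le_compat_l.
  have h2 : gamma * mu / (mu + M) * (alpha * (1 - eta)) <= gamma * mu / (mu + N) * (alpha * (1 - eta)).
    apply: Rmult_le_compat_r => //; nra.
  have e : alpha * gamma * (1 - eta) * mu / (mu + N) = gamma * mu / (mu + N) * (alpha * (1 - eta)).
    by field; lra.
  lra.
move=> hQx.
have hk := Hkey 1 ltac:(lra).
have hQs : Qs <= - (Fk - Fstar) / 2 by nra.
split.
  have : alpha * gamma * (1 - eta) * Qs <= alpha * gamma * (1 - eta) * (- (Fk - Fstar) / 2).
    by apply: Rmult_le_compat_l.
  nra.
have : gamma / 2 * cmin eta beta gamma sigma L <= gamma / 2 * (alpha * (1 - eta)).
  apply: Rmult_le_compat_l => //; lra.
nra.
Qed.


Theorem theorem2 (n : nat) (f : vec n -> R) (gradf : vec n -> vec n) (psi : vec n -> ER)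
  (L Fstar : R) (P : vec n -> vec n) (mu eta beta gamma sigma M : R)
  (x : nat -> vec n) (H : nat -> mat n) (d : nat -> vec n) (alpha : nat -> R) :
  (* Assumption 1 *)
  0 < L -> is_gradient f gradf -> lipschitz_grad gradf L ->
  ext_convex psi -> ext_proper psi -> ext_closed psi ->
  (exists b, forall y, ERle (ERf b) (Fsum f psi y)) ->
  is_inf_ER (Fsum f psi) Fstar ->
  (exists y, Fsum f psi y = ERf Fstar) ->
  is_proj_onto (fun y => Fsum f psi y = ERf Fstar) P ->
  (* further hypotheses *)
  convex_fun f ->
  0 < mu -> opt_set_strongly_convex (Fsum f psi) Fstar P mu ->
  (* Algorithm 1 *)
  0 < beta < 1 -> 0 < gamma < 1 -> 0 <= eta < 1 ->
  (exists p, psi (x 0%nat) = ERf p) ->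
  (forall k, mat_symmetric (H k)) ->
  0 < sigma -> sigma <= M ->
  (forall k v, sigma * (vnorm v) ^ 2 <= quad (H k) v <= M * (vnorm v) ^ 2) ->
  (forall k, eta_inexact gradf psi (H k) (x k) eta (d k)) ->
  (forall k, armijo_step f gradf psi beta gamma (x k) (d k) (alpha k)) ->
  (forall k, x (S k) = vadd (x k) (vscal (alpha k) (d k))) ->
  forall k : nat, exists Fk Fk1 : R,
    Fsum f psi (x k) = ERf Fk /\ Fsum f psi (x (S k)) = ERf Fk1 /\
    Fk1 - Fstar <= (1 - alpha k * gamma * (1 - eta) * mu / (mu + opnorm (H k))) * (Fk - Fstar) /\
    1 - alpha k * gamma * (1 - eta) * mu / (mu + opnorm (H k))
      <= 1 - gamma * mu / (mu + M) * cmin eta beta gamma sigma L /\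
    (quad (H k) (vsub (x k) (P (x k))) <= Fk - Fstar ->
       Fk1 - Fstar <= (1 - (1 - eta) * gamma * alpha k / 2) * (Fk - Fstar) /\
       1 - (1 - eta) * gamma * alpha k / 2 <= 1 - gamma / 2 * cmin eta beta gamma sigma L).
Proof.
move=> HL0 Hg HL Hcv _ _ _ Hinf _ _ Hcf Hmu Hosc Hb Hgm He [p0 Hp0] HS Hs HsM HQ Hin Harm Hx.
have Hfin : forall k, exists p, psi (x k) = ERf p.
  elim=> [|k [p Hp]]; first by exists p0.
  have [q [Hq _]] := step HL0 Hg HL Hcv Hcf Hmu Hosc Hb Hgm He Hp (HS k) Hs HsM (HQ k) (Hin k) (Harm k).
  by exists q; rewrite Hx.
move=> k.
have [p Hp] := Hfin k.
have [q [Hq [h1 [h2 h3]]]] := step HL0 Hg HL Hcv Hcf Hmu Hosc Hb Hgm He Hp (HS k) Hs HsM (HQ k) (Hin k) (Harm k).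
exists (p + f (x k)), (q + f (x (S k))).
rewrite /Fsum Hp Hx Hq /=.
by split; [|split; [|split]].
Qed.
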